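(* Let $\mathcal{S}\subseteq\mathcal{X}\times\mathcal{Y}$, $f:\mathcal{X}\times\mathcal{Y}\to\mathcal{V}$, and suppose $\mathcal{A}\times\mathcal{B}\subseteq\mathcal{X}\times\mathcal{Y}$ is solvable for $(\mathcal{S},f)$. Then for any $n$, $\mathbf{x}\in\mathcal{A}^n$, $\mathbf{y}\in\mathcal{B}^n$ with $(x_i,y_i)\in\mathcal{S}$ for all $i$, the type $f_n^{\mathsf t}(\mathbf{x},\mathbf{y})$ is uniquely determined by $P_{\mathbf{x}}$ and $P_{\mathbf{y}}$. More precisely, any two joint types $P^{(1)},P^{(2)}\in\mathcal{P}_n(\mathcal{A}\times\mathcal{B})$ with $\mathsf{supp}(P^{(j)})\subseteq\mathcal{S}$ and $\sum_{y\in\mathcal{B}}P^{(j)}(x,y)=P_{\mathbf{x}}(x)$ for all $x\in\mathcal{A}$, $\sum_{x\in\mathcal{A}}P^{(j)}(x,y)=P_{\mathbf{y}}(y)$ for all $y\in\mathcal{B}$ ($j=1,2$) satisfy $$\sum_{(x,y)\in\mathcal{A}\times\mathcal{B}:f(x,y)=v}P^{(1)}(x,y)=\sum_{(x,y)\in\mathcal{A}\times\mathcal{B}:f(x,y)=v}P^{(2)}(x,y)\quad\forall v\in\mathcal{V}.$$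
   Context: Finite alphabets. Types: $P_{\mathbf{s}}(s)=|\{i:s_i=s\}|/n$; $\mathcal{P}_n(\cdot)$ is the set of types of length-$n$ sequences. $f_n^{\mathsf t}(\mathbf{x},\mathbf{y})$ is the type of $(f(x_1,y_1),\dots,f(x_n,y_n))$. For $\mathcal{A}\times\mathcal{B}\subseteq\mathcal{X}\times\mathcal{Y}$, a simple loop is a set $\{(a_0,b_0),(a_0,b_1),(a_1,b_1),(a_1,b_2),\dots,(a_{k-2},b_{k-1}),(a_{k-1},b_{k-1}),(a_{k-1},b_0)\}\subseteq(\mathcal{A}\times\mathcal{B})\cap\mathcal{S}$ with the $a_i$ pairwise distinct and the $b_i$ pairwise distinct. For $v\in\mathcal{V}$ let $\mathcal{I}_+(v)=\{i: f(a_i,b_i)=v\}$ and $\mathcal{I}_-(v)=\{i: f(a_i,b_{i+1\bmod k})=v\}$. $\mathcal{A}\times\mathcal{B}$ is solvable for $(\mathcal{S},f)$ if every simple loop in it satisfies $|\mathcal{I}_+(v)|=|\mathcal{I}_-(v)|$ for all $v\in\mathcal{V}$. *)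

(* Defs.v *)
From HB Require Import structures.
From mathcomp Require Import all_boot all_order all_algebra.
Set Implicit Arguments. Unset Strict Implicit. Unset Printing Implicit Defensive.
Import Order.TTheory GRing.Theory Num.Theory.

Definition type_of (T : eqType) (s : seq T) (t : T) : rat :=
  ((count_mem t s)%:R / (size s)%:R)%R.

Definition simple_loop (X Y : finType) (S : {set X * Y}) (A : {set X}) (B : {set Y})
    (k : nat) (a : 'I_k -> X) (b : 'I_k -> Y) : Prop :=
  injective a /\ injective b /\
  (forall i, a i \in A) /\ (forall i, b i \in B) /\
  (forall i, (a i, b i) \in S) /\
  (forall i, (a i, b (ordS i)) \in S).

Definition Iplus (X Y : finType) (V : eqType) (f : X -> Y -> V) (k : nat)
    (a : 'I_k -> X) (b : 'I_k -> Y) (v : V) : {set 'I_k} :=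
  [set i | f (a i) (b i) == v].
Definition Iminus (X Y : finType) (V : eqType) (f : X -> Y -> V) (k : nat)
    (a : 'I_k -> X) (b : 'I_k -> Y) (v : V) : {set 'I_k} :=
  [set i | f (a i) (b (ordS i)) == v].

Definition solvable (X Y : finType) (V : eqType) (S : {set X * Y}) (f : X -> Y -> V)
    (A : {set X}) (B : {set Y}) : Prop :=
  forall k (a : 'I_k -> X) (b : 'I_k -> Y), simple_loop S A B a b ->
    forall v : V, #|Iplus f a b v| = #|Iminus f a b v|.

(* Main.v *)
Require Import Defs.
From HB Require Import structures.
From mathcomp Require Import all_boot all_order all_algebra zify.
Set Implicit Arguments. Unset Strict Implicit. Unset Printing Implicit Defensive.
Import Order.TTheory GRing.Theory Num.Theory.
Local Open Scope ring_scope.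

Section Chi.
Variables (X Y : finType) (k : nat) (a : 'I_k -> X) (b : 'I_k -> Y).

Definition chi (p : X * Y) : rat :=
  \sum_(i < k) ((a i, b i) == p)%:R - \sum_(i < k) ((a i, b (ordS i)) == p)%:R.

Lemma sum_pick (T : finType) (t : T) (c : rat) :
  \sum_(u : T) (t == u)%:R * c = c.
Proof.
rewrite (bigD1 t) //= eqxx mul1r big1 ?addr0 // => u /negbTE.
by rewrite eq_sym => ->; rewrite mul0r.
Qed.

Lemma chi_row x : \sum_(y : Y) chi (x, y) = 0.
Proof.
rewrite /chi sumrB [X in X - _]exchange_big [X in _ - X]exchange_big /=.
have E : forall yy : 'I_k -> Y, \sum_(i < k) \sum_(y : Y) ((a i, yy i) == (x, y))%:R
    = \sum_(i < k) (a i == x)%:R :> rat.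
  move=> yy; apply: eq_bigr => i _.
  under eq_bigr => y _ do rewrite xpair_eqE -mulnb natrM mulrC.
  by rewrite sum_pick.
by rewrite (E b) (E (fun i => b (ordS i))) subrr.
Qed.

Lemma chi_col y : \sum_(x : X) chi (x, y) = 0.
Proof.
rewrite /chi sumrB [X in X - _]exchange_big [X in _ - X]exchange_big /=.
have E : forall i : 'I_k, forall yy : Y, \sum_(x : X) ((a i, yy) == (x, y))%:R
    = (yy == y)%:R :> rat.
  move=> i yy; under eq_bigr => x _ do rewrite xpair_eqE -mulnb natrM.
  by rewrite sum_pick.
under eq_bigr => i _ do rewrite E.
under [X in _ - X]eq_bigr => i _ do rewrite E.
rewrite (reindex_inj (@ordS_inj k)) /=. by rewrite subrr.
Qed.

Lemma chi_f (V : eqType) (g : X -> Y -> V) v :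
  \sum_(p | g p.1 p.2 == v) chi p =
  #|[set i | g (a i) (b i) == v]|%:R - #|[set i | g (a i) (b (ordS i)) == v]|%:R.
Proof.
rewrite /chi sumrB [X in X - _](exchange_big_dep xpredT) //= [X in _ - X](exchange_big_dep xpredT) //=.
have E : forall yy : 'I_k -> Y,
  \sum_(i < k) \sum_(p | (g p.1 p.2 == v) && true) ((a i, yy i) == p)%:R
   = #|[set i | g (a i) (yy i) == v]|%:R :> rat.
  move=> yy; rewrite -sum1_card natr_sum [RHS]big_mkcond /=; apply: eq_bigr => i _.
  rewrite inE big_mkcond /= (bigD1 (a i, yy i)) //= eqxx big1 ?addr0.
    by rewrite andbT; case: ifP.
  by move=> p /negbTE; rewrite eq_sym => ->; case: ifP.
by rewrite (E b) (E (fun i => b (ordS i))).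
Qed.

End Chi.
Section Chi2.
Variables (X Y : finType) (k : nat) (a : 'I_k -> X) (b : 'I_k -> Y).

Lemma ordS_neq (j : 'I_k) : (1 < k)%N -> ordS j != j.
Proof.
move=> k1; apply/eqP => /(congr1 val) /= E.
have jk := ltn_ord j.
have [lt|ge] := ltnP j.+1 k.
  by move: E; rewrite modn_small //; lia.
have ej : j.+1 = k by lia.
by move: E; rewrite ej modnn; lia.
Qed.

Lemma chi_e0 (j : 'I_k) : injective a -> injective b -> (1 < k)%N ->
  chi a b (a j, b (ordS j)) = -1.
Proof.
move=> ia ib k1; rewrite /chi big1 ?sub0r.
  congr (- _); rewrite (bigD1 j) //= eqxx big1 ?addr0 // => i ij.
  by rewrite xpair_eqE (inj_eq ia) (negbTE ij).
move=> i _; rewrite xpair_eqE (inj_eq ia) (inj_eq ib).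
case: eqP => [->|] //=; by rewrite eq_sym (negbTE (ordS_neq j k1)).
Qed.

Lemma chi_supp p : chi a b p != 0 ->
  exists i, p = (a i, b i) \/ p = (a i, b (ordS i)).
Proof.
move=> H.
case: (boolP [exists i, (p == (a i, b i)) || (p == (a i, b (ordS i)))]).
  by case/existsP => i /orP [/eqP E|/eqP E]; exists i; [left|right].
move/existsPn => N; move: H; rewrite /chi !big1 ?subrr ?eqxx // => i _;
  have := N i; rewrite negb_or => /andP [N1 N2].
  by rewrite eq_sym (negbTE N2).
by rewrite eq_sym (negbTE N1).
Qed.
End Chi2.
Local Close Scope ring_scope.
Section Loop.
Variables (X Y : finType) (H : pred (X * Y)) (a0 : X) (b0 : Y).

Definition erel : rel (X + Y) := fun u w =>
  match u, w with
  | inl x, inr y => H (x, y)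
  | inr y, inl x => H (x, y)
  | _, _ => false
  end.

Definition isl (u : X + Y) := if u is inl _ then true else false.
Definition getl (u : X + Y) := if u is inl x then x else a0.
Definition getr (u : X + Y) := if u is inr y then y else b0.

Lemma isl_getl u : isl u -> u = inl (getl u). Proof. by case: u. Qed.
Lemma isr_getr u : ~~ isl u -> u = inr (getr u). Proof. by case: u. Qed.
Lemma erel_isl u w : erel u w -> isl w = ~~ isl u.
Proof. by case: u; case: w. Qed.

Lemma loop_of_path : H (a0, b0) = false -> connect erel (inr b0) (inl a0) ->
  exists k (a : 'I_k -> X) (b : 'I_k -> Y) (j : 'I_k),
  [/\ (1 < k)%N, injective a, injective b, (a j, b (ordS j)) = (a0, b0) &
   (forall i, H (a i, b i)) /\
   forall i, H (a i, b (ordS i)) || ((a i, b (ordS i)) == (a0, b0))].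
Proof.
move=> H0 /connectP [p pth lst].
move: lst; case: (shortenP pth) => p' pth' uq _ lst {p pth}.
set q := inr b0 :: p'.
set s := size p'.
have edge : forall j, (j < s)%N -> erel (nth (inr b0) q j) (nth (inr b0) q j.+1).
  by move=> j js; move/(pathP (inr b0)): pth' => /(_ j js).
have par : forall j, (j < s.+1)%N -> isl (nth (inr b0) q j) = odd j.
  elim=> [//|j IH] js.
  by rewrite (erel_isl (edge j js)) IH ?(ltnW js).
have lastq : nth (inr b0) q s = inl a0 by rewrite lst (last_nth (inr b0)).
have os : odd s by rewrite -par // lastq.
set k := (s.+1)./2.
have sk : s.+1 = k.*2.
  by have := odd_double_half s.+1; rewrite /= os /= add0n.
have k2 : (1 < k)%N.
  case: (ltnP 1 k) => // k1.
  have s1 : s = 1%N by move: sk k1 os; case: (k) => [|[|]] //=; lia.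
  have := edge 0; rewrite s1 => /(_ isT).
  have := lastq; rewrite s1 /= => ->. by rewrite /= H0.
have k0 : (0 < k)%N by lia.
have par_l : forall i, (i < k)%N -> nth (inr b0) q (2 * i).+1 = inl (getl (nth (inr b0) q (2 * i).+1)).
  move=> i ik; apply: isl_getl; rewrite par; last by lia.
  by rewrite /= oddM.
have par_r : forall i, (i < k)%N -> nth (inr b0) q (2 * i) = inr (getr (nth (inr b0) q (2 * i))).
  move=> i ik; apply: isr_getr; rewrite par; last by lia.
  by rewrite oddM.
pose a (i : 'I_k) := getl (nth (inr b0) q (2 * i).+1).
pose b (i : 'I_k) := getr (nth (inr b0) q (2 * i)).
have uq' : forall j1 j2, (j1 < k.*2)%N -> (j2 < k.*2)%N ->
    nth (inr b0) q j1 = nth (inr b0) q j2 -> j1 = j2.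
  move=> j1 j2 h1 h2 E; apply/eqP; rewrite -(nth_uniq (inr b0) _ _ uq) ?E //=.
    by rewrite -/s sk. by rewrite -/s sk.
have ia : injective a.
  move=> i1 i2 E; apply: ord_inj.
  have := uq' (2 * i1).+1 (2 * i2).+1.
  rewrite (par_l _ (ltn_ord i1)) (par_l _ (ltn_ord i2)) -/(a i1) -/(a i2) E.
  have := ltn_ord i1; have := ltn_ord i2 => l2 l1 /(_ _ _ erefl).
  lia.
have ib : injective b.
  move=> i1 i2 E; apply: ord_inj.
  have := uq' (2 * i1) (2 * i2).
  rewrite (par_r _ (ltn_ord i1)) (par_r _ (ltn_ord i2)) -/(b i1) -/(b i2) E.
  have := ltn_ord i1; have := ltn_ord i2 => l2 l1 /(_ _ _ erefl).
  lia.
have ordSv : forall i : 'I_k, val (ordS i) = if (i.+1 < k)%N then i.+1 else 0%N.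
  move=> i /=; case: ifP => h; first by rewrite modn_small.
  have -> : i.+1 = k by have := ltn_ord i; lia.
  by rewrite modnn.
have last_edge : forall i : 'I_k, (i.+1 < k)%N = false -> (a i, b (ordS i)) = (a0, b0).
  move=> i h; have E : (2 * i).+1 = s.
    have := ltn_ord i; move: h; rewrite ltnNge => /negbFE; lia.
  rewrite /a /b ordSv h E lastq /=. by [].
have kp : (k.-1 < k)%N by lia.
exists k, a, b, (Ordinal kp).
split => //.
  apply: last_edge => /=; lia.
split=> i.
  have := edge (2 * i); rewrite (par_l _ (ltn_ord i)) (par_r _ (ltn_ord i)) /=.
  apply; have := ltn_ord i; lia.
case h : (i.+1 < k)%N; last by rewrite last_edge // eqxx orbT.
apply/orP; left.
have := edge (2 * i).+1; rewrite /b ordSv h.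
have -> : ((2 * i).+2 = 2 * i.+1)%N by lia.
rewrite (par_l _ (ltn_ord i)) (par_r _ h) /=.
apply; lia.
Qed.
End Loop.
Local Open Scope ring_scope.

Section Main.
Variables (X Y V : finType) (S : {set X * Y}) (f : X -> Y -> V) (A : {set X}) (B : {set Y}).
Hypothesis sol : solvable S f A B.

Lemma conn_edge (H : pred (X * Y)) z x y : H (x, y) ->
  connect (erel H) z (inl x) = connect (erel H) z (inr y).
Proof.
move=> h; apply/idP/idP => c; apply: connect_trans c _; apply: connect1 => //=.
Qed.

Lemma key N : forall D : X * Y -> rat, (#|[pred p | D p != 0%R]| <= N)%N ->
  (forall p, D p != 0 -> [&& p \in S, p.1 \in A & p.2 \in B]) ->
  (forall x, \sum_y D (x, y) = 0) -> (forall y, \sum_x D (x, y) = 0) ->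
  forall v, \sum_(p | f p.1 p.2 == v) D p = 0.
Proof.
elim: N => [|N IH] D hN hS hr hc v.
  rewrite big1 // => p _; apply/eqP; apply: contraTT hN => nz.
  by rewrite -ltnNge; apply/card_gt0P; exists p.
case: (pickP [pred p | D p != 0]) => [[a0 b0] /= nz|z]; last first.
  by rewrite big1 // => p _; have := z p; rewrite /= => /negbFE/eqP.
set e0 := (a0, b0).
pose Hp p := (D p != 0) && (p != e0).
have Hpe : Hp e0 = false by rewrite /Hp eqxx andbF.
have cn : connect (erel Hp) (inr b0) (inl a0).
  apply/negPn/negP => nc.
  have E : \sum_y (connect (erel Hp) (inr b0) (inr y))%:R * \sum_x D (x, y)
         - \sum_x (connect (erel Hp) (inr b0) (inl x))%:R * \sum_y D (x, y)
         = \sum_p D p * ((connect (erel Hp) (inr b0) (inr p.2))%:R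
                         - (connect (erel Hp) (inr b0) (inl p.1))%:R).
    under eq_bigr => y _ do rewrite mulr_sumr.
    under [X in _ - X]eq_bigr => x _ do rewrite mulr_sumr.
    rewrite exchange_big /= !pair_bigA -sumrB; apply: eq_bigr => p _.
    by case: p => x y /=; rewrite mulrBr; congr (_ - _); apply: mulrC.
  have Z1 : \sum_y (connect (erel Hp) (inr b0) (inr y))%:R * \sum_x D (x, y) = 0.
    by apply: big1 => y _; rewrite hc mulr0.
  have Z2 : \sum_x (connect (erel Hp) (inr b0) (inl x))%:R * \sum_y D (x, y) = 0.
    by apply: big1 => x _; rewrite hr mulr0.
  move: E; rewrite Z1 Z2 subrr (bigD1 e0) //= connect0 (negbTE nc) big1 ?addr0.
    by move/esym/eqP; rewrite (_ : true%:R = 1) // mulr1 (negbTE nz).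
  move=> [x y] /= ne; case: (eqVneq (D (x, y)) 0) => [->|dn]; first by rewrite mul0r.
  by rewrite (@conn_edge Hp _ x y) ?subrr ?mulr0 // /Hp dn ne.
have [k [a [b [j [k1 ia ib ej [e1 e2]]]]]] := loop_of_path Hpe cn.
have hpD : forall p, Hp p || (p == e0) -> D p != 0.
  by move=> p /orP [/andP [] //|/eqP ->].
have sl : simple_loop S A B a b.
  have T1 : forall i, D (a i, b i) != 0 by move=> i; apply: hpD; rewrite e1.
  have T2 : forall i, D (a i, b (ordS i)) != 0 by move=> i; apply: hpD; rewrite e2.
  split=> //; split=> //.
  split; first by move=> i; have /and3P [] := hS _ (T1 i).
  split; first by move=> i; have /and3P [] := hS _ (T1 i).
  split; first by move=> i; have /and3P [] := hS _ (T1 i).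
  by move=> i; have /and3P [] := hS _ (T2 i).
pose D' p := D p + D e0 * chi a b p.
have D'e0 : D' e0 = 0.
  by rewrite /D' /e0 -ej chi_e0 // mulrN1 subrr.
have supp : forall p, D' p != 0 -> Hp p.
  move=> p nz'; have pe : p != e0 by apply: contraNneq nz' => ->; rewrite D'e0.
  rewrite /Hp pe andbT; apply/negP => /eqP Dp.
  have [i [E|E]] : exists i, p = (a i, b i) \/ p = (a i, b (ordS i)).
    apply: chi_supp; apply/negP => /eqP c0.
    by move: nz'; rewrite /D' Dp c0 mulr0 addr0 eqxx.
  - by move: Dp; rewrite E => /eqP; rewrite (negbTE (hpD _ (introT orP (or_introl (e1 i))))).
  - by move: Dp; rewrite E => /eqP; rewrite (negbTE (hpD _ (e2 i))).
have IH' := IH D'.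
have : \sum_(p | f p.1 p.2 == v) D' p = 0.
  apply: IH'.
  - have : (#|[pred p | D' p != 0%R]| <= #|[predD1 [pred p | D p != 0%R] & e0]|)%N.
      apply: subset_leq_card; apply/subsetP => p; rewrite !inE => /supp.
      by rewrite /Hp => /andP [-> ->].
    move=> h; move: hN; rewrite (cardD1 e0) inE nz /= add1n ltnS => hN'; exact: leq_trans h hN'.
  - move=> p /supp /andP [dn _]; exact: hS.
  - move=> x; rewrite /D' big_split /= hr -mulr_sumr chi_row mulr0 addr0 //.
  - move=> y; rewrite /D' big_split /= hc -mulr_sumr chi_col mulr0 addr0 //.
rewrite /D' big_split /= -mulr_sumr chi_f.
have := sol sl v; rewrite /Iplus /Iminus => ->.
by rewrite subrr mulr0 addr0.
Qed.

Lemma type_of_nz (T : eqType) (z : seq T) p : type_of z p != 0 -> p \in z.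
Proof.
apply: contraNT => /count_memPn h; by rewrite /type_of h mul0r.
Qed.

End Main.

Local Close Scope ring_scope.
(* Joint types P^(j) in P_n(A x B) are represented as type_of z_j for
   z_j : n.-tuple (X * Y) with entries in A x B. *)
Theorem lemma2 (X Y : finType) (V : finType) (S : {set X * Y}) (f : X -> Y -> V)
    (A : {set X}) (B : {set Y}) :
  solvable S f A B ->
  forall (n : nat) (x : n.-tuple X) (y : n.-tuple Y),
    (forall i : 'I_n, tnth x i \in A) ->
    (forall i : 'I_n, tnth y i \in B) ->
    (forall i : 'I_n, (tnth x i, tnth y i) \in S) ->
  forall z1 z2 : n.-tuple (X * Y),
    (forall p, p \in z1 -> p \in setX A B) ->
    (forall p, p \in z2 -> p \in setX A B) ->
    (forall p, type_of z1 p != 0%R -> p \in S) ->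
    (forall p, type_of z2 p != 0%R -> p \in S) ->
    (forall a, a \in A -> (\sum_(b in B) type_of z1 (a, b))%R = type_of x a) ->
    (forall b, b \in B -> (\sum_(a in A) type_of z1 (a, b))%R = type_of y b) ->
    (forall a, a \in A -> (\sum_(b in B) type_of z2 (a, b))%R = type_of x a) ->
    (forall b, b \in B -> (\sum_(a in A) type_of z2 (a, b))%R = type_of y b) ->
  forall v : V,
    (\sum_(p in setX A B | f p.1 p.2 == v) type_of z1 p)%R =
    (\sum_(p in setX A B | f p.1 p.2 == v) type_of z2 p)%R.

Proof.
move=> sol n x y hxA hyB hxyS z1 z2 hz1 hz2 hS1 hS2 r1 c1 r2 c2 v.
pose D p := (type_of z1 p - type_of z2 p)%R.
have zero_out : forall (z : n.-tuple (X * Y)), (forall p, p \in z -> p \in setX A B) ->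
    forall p, p \notin setX A B -> type_of z p = 0%R.
  move=> z hz p hp; apply/eqP; apply: contraNT hp => /type_of_nz; exact: hz.
have hD : forall p, D p != 0%R -> [&& p \in S, p.1 \in A & p.2 \in B].
  move=> p nz.
  have [h1|h2] : type_of z1 p != 0%R \/ type_of z2 p != 0%R.
    case: (eqVneq (type_of z1 p) 0%R) => e; last by left.
    by right; move: nz; rewrite /D e GRing.sub0r GRing.oppr_eq0.
  - by rewrite hS1 //= -in_setX hz1 // type_of_nz.
  - by rewrite hS2 //= -in_setX hz2 // type_of_nz.
have hr : forall a, (\sum_y D (a, y))%R = 0%R.
  move=> a; rewrite GRing.sumrB; case: (boolP (a \in A)) => ha.
    have E : forall z : n.-tuple (X * Y), (forall p, p \in z -> p \in setX A B) ->
        (\sum_y type_of z (a, y) = \sum_(y in B) type_of z (a, y))%R.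
      move=> z hz; rewrite [RHS]big_mkcond; apply: eq_bigr => yy _.
      case: ifP => // hy; apply: zero_out hz _ _; by rewrite in_setX /= hy andbF.
    by rewrite (E z1 hz1) (E z2 hz2) r1 // r2 // GRing.subrr.
  rewrite !big1 ?GRing.subrr // => yy _.
    by apply: zero_out hz2 _ _; rewrite in_setX /= (negbTE ha).
  by apply: zero_out hz1 _ _; rewrite in_setX /= (negbTE ha).
have hc : forall b, (\sum_x D (x, b))%R = 0%R.
  move=> b; rewrite GRing.sumrB; case: (boolP (b \in B)) => hb.
    have E : forall z : n.-tuple (X * Y), (forall p, p \in z -> p \in setX A B) ->
        (\sum_x type_of z (x, b) = \sum_(x in A) type_of z (x, b))%R.
      move=> z hz; rewrite [RHS]big_mkcond; apply: eq_bigr => xx _.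
      case: ifP => // hx; apply: zero_out hz _ _; by rewrite in_setX /= hx.
    by rewrite (E z1 hz1) (E z2 hz2) c1 // c2 // GRing.subrr.
  rewrite !big1 ?GRing.subrr // => xx _.
    by apply: zero_out hz2 _ _; rewrite in_setX /= (negbTE hb) andbF.
  by apply: zero_out hz1 _ _; rewrite in_setX /= (negbTE hb) andbF.
have K := key sol (leqnn _) hD hr hc v.
apply/eqP; rewrite -GRing.subr_eq0 -GRing.sumrB; apply/eqP.
apply: eq_trans _ K.
rewrite [LHS]big_mkcond [RHS]big_mkcond /=; apply: eq_bigr => p _.
case: (boolP (p \in setX A B)) => hp //=.
case: ifP => // _.
by rewrite /D (zero_out _ hz1 _ hp) (zero_out _ hz2 _ hp) GRing.subrr.
Qed.
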